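(* Let $\zeta_2=\int_0^\infty \frac{\mathrm{d}t}{\sqrt{1+t^4}}$ and let $\mathrm{sleafh}_2:(-\zeta_2,\zeta_2)\to\mathbb{R}$ be the hyperbolic leaf function of basis $2$. For every real $l$ with $2l\in(-\zeta_2,\zeta_2)$, $$\mathrm{sleafh}_2(2l)=\frac{2\,\mathrm{sleafh}_2(l)\sqrt{1+(\mathrm{sleafh}_2(l))^4}}{1-(\mathrm{sleafh}_2(l))^4}.$$
   Context: For a natural number $n$, let $\zeta_n=\int_0^\infty \frac{\mathrm{d}t}{\sqrt{1+t^{2n}}}$. The hyperbolic leaf function $\mathrm{sleafh}_n$ is the solution $r(l)$ on $(-\zeta_n,\zeta_n)$ of $\frac{\mathrm{d}^2r}{\mathrm{d}l^2}=n\,r^{2n-1}$ with $r(0)=0$, $r'(0)=1$; equivalently it is the inverse function of $r\mapsto \int_0^r \frac{\mathrm{d}t}{\sqrt{1+t^{2n}}}$, $r\in\mathbb{R}$. *)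

(* Defs.v *)
From Stdlib Require Import Reals ClassicalEpsilon.
From Coquelicot Require Import Coquelicot.
Open Scope R_scope.

Definition leaf_integrand (n : nat) (t : R) : R := / sqrt (1 + t ^ (2 * n)).

Definition leaf_arc (n : nat) (r : R) : R := RInt (leaf_integrand n) 0 r.

Definition zeta (n : nat) : R :=
  real (Lim (fun x => leaf_arc n x) p_infty).

(* sleafh_n : inverse function of leaf_arc n (meaningful on (-zeta_n, zeta_n)) *)
Definition sleafh (n : nat) (l : R) : R :=
  epsilon (inhabits 0) (fun r => leaf_arc n r = l).

(* Main.v *)
Require Import Defs.
From Stdlib Require Import Reals Lra Psatz ClassicalEpsilon.
From Coquelicot Require Import Coquelicot.
Open Scope R_scope.

Definition f (t : R) : R := / sqrt (1 + t ^ 4).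
Definition F (r : R) : R := RInt f 0 r.

Lemma pos4 t : 0 < 1 + t ^ 4.
Proof. replace (t^4) with ((t^2)^2) by ring. pose proof (pow2_ge_0 (t^2)). lra. Qed.

Lemma f_cont t : continuous f t.
Proof. apply (ex_derive_continuous (K:=R_AbsRing) (V:=R_NormedModule)). unfold f. auto_derive.
  split; [apply pos4|]. split; [|exact I].
  apply Rgt_not_eq, sqrt_lt_R0, pos4. Qed.

Lemma F_der r : is_derive F r (f r).
Proof.
  apply (is_derive_RInt (V:=R_CompleteNormedModule)) with 0.
  - apply filter_forall. intros b. unfold F; apply (RInt_correct (V:=R_CompleteNormedModule)), ex_RInt_continuous.
    intros; apply f_cont.
  - apply f_cont.
Qed.

Lemma F_cont : continuity F.
Proof. intro x. apply continuity_pt_filterlim. apply (ex_derive_continuous (K:=R_AbsRing) (V:=R_NormedModule)).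
  eexists; apply F_der. Qed.

Lemma f_bounds t : 0 < f t <= 1.
Proof. unfold f. pose proof (pos4 t).
  assert (1 <= sqrt (1 + t^4)).
  { rewrite <- sqrt_1 at 1. apply sqrt_le_1_alt. pose proof (pow2_ge_0 (t^2)). 
    replace (t^4) with ((t^2)^2) by ring. lra. }
  split. apply Rinv_0_lt_compat; lra.
  rewrite <- Rinv_1 at 2. apply Rinv_le_contravar; lra. Qed.

Lemma F_mono a b : a < b -> 0 < F b - F a <= b - a.
Proof. intros Hab.
  destruct (MVT_gen F a b f) as [c [Hc E]].
  - intros; apply F_der.
  - intros; apply F_cont.
  - rewrite E. pose proof (f_bounds c). split. nra. nra. Qed.

Lemma F_inj a b : F a = F b -> a = b.
Proof. intros E. destruct (Rtotal_order a b) as [H|[H|H]]; auto.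
  pose proof (F_mono _ _ H); lra. pose proof (F_mono _ _ H); lra. Qed.

Lemma zero_der_loc (h : R -> R) a b :
  (forall x, Rmin a b <= x <= Rmax a b -> is_derive h x 0) -> h b = h a.
Proof. intros D. destruct (MVT_gen h a b (fun _ => 0)) as [c [_ E]].
  - intros; apply D; lra.
  - intros. apply continuity_pt_filterlim, (ex_derive_continuous (K:=R_AbsRing) (V:=R_NormedModule)). eexists; apply D; auto.
  - lra. Qed.
Lemma zero_der (h : R -> R) a b :
  (forall x, is_derive h x 0) -> h b = h a.
Proof. intros D; apply zero_der_loc; auto. Qed.

Lemma F0 : F 0 = 0.
Proof. unfold F. apply (RInt_point (V:=R_CompleteNormedModule)). Qed.

Lemma der_plus (u v : R->R) x du dv : is_derive u x du -> is_derive v x dv ->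
  is_derive (fun y => u y + v y) x (du+dv).
Proof. intros; apply (is_derive_plus (K:=R_AbsRing) (V:=R_NormedModule)); auto. Qed.
Lemma der_minus (u v : R->R) x du dv : is_derive u x du -> is_derive v x dv ->
  is_derive (fun y => u y - v y) x (du-dv).
Proof. intros; apply (is_derive_minus (K:=R_AbsRing) (V:=R_NormedModule)); auto. Qed.
Lemma der_comp (u v : R->R) x du dv : is_derive u (v x) du -> is_derive v x dv ->
  is_derive (fun y => u (v y)) x (dv*du).
Proof. intros; apply (is_derive_comp (K:=R_AbsRing) (V:=R_NormedModule)); auto. Qed.
Lemma der_scal (u : R->R) k x du : is_derive u x du ->
  is_derive (fun y => k * u y) x (k*du).
Proof. intros; apply is_derive_scal; auto. Qed.
Lemma der_val (u : R->R) x a b : is_derive u x a -> a = b -> is_derive u x b.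
Proof. intros H ->; exact H. Qed.

Lemma F_odd x : F (- x) = - F x.
Proof.
  assert (H : F (-x) + F x = F (-0) + F 0).
  { apply (zero_der (fun x => F (-x) + F x) 0 x). intros y.
    eapply der_val. apply der_plus. apply (der_comp F Ropp). apply F_der.
    apply (der_val _ _ (-1)). auto_derive; auto. reflexivity. apply F_der.
    assert (E : f (- y) = f y).
    { unfold f. do 3 f_equal. simpl. ring. }
    rewrite E. change (-1 * f y + f y = 0). ring. }
  rewrite Ropp_0, F0 in H. lra.
Qed.
Definition g (s : R) : R := 2 * s * sqrt (1 + s ^ 4) / (1 - s ^ 4).
Lemma g_der s : -1 < s < 1 ->
  is_derive g s (2 * (1 + 6 * s^4 + s^8) / ((1 - s^4)^2 * sqrt (1 + s^4))).
Proof. intros Hs.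
  assert (Hu : s^4 < 1). { replace (s^4) with ((s^2)^2) by ring.
     assert (s^2 < 1) by nra. assert (0 <= s^2) by nra. nra. }
  pose proof (pos4 s).
  assert (Hq := sqrt_lt_R0 _ H). assert (Hq2 := sqrt_sqrt (1 + s^4) (Rlt_le _ _ H)).
  unfold g. auto_derive.
  - repeat split; try lra.
  - replace (s*(s*(s*(s*1)))) with (s^4) by ring.
    replace (s^8) with (s^4*s^4) by ring.
    set (q := sqrt (1 + s^4)) in *.
    assert (1 - s^4 <> 0) by lra. 
    field_simplify; [| repeat split; lra | repeat split; lra].
    replace (q^2) with (1+s^4) by (rewrite <- Hq2; ring). f_equal. ring.
Qed.


Lemma u_lt1 s : -1 < s < 1 -> s^4 < 1.
Proof. intros Hs. replace (s^4) with ((s^2)^2) by ring.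
     assert (s^2 < 1) by nra. assert (0 <= s^2) by nra. nra. Qed.

Lemma sqrt_g s : -1 < s < 1 ->
  sqrt (1 + g s ^ 4) = (1 + 6 * s^4 + s^8) / (1 - s^4)^2.
Proof. intros Hs. pose proof (u_lt1 s Hs) as Hu.
  pose proof (pos4 s) as H.
  assert (Hq2 := sqrt_sqrt (1 + s^4) (Rlt_le _ _ H)).
  assert (0 <= s^4) by (replace (s^4) with ((s^2)^2) by ring; apply pow2_ge_0).
  rewrite <- (sqrt_pow2 ((1 + 6 * s^4 + s^8) / (1 - s^4)^2)).
  - f_equal. unfold g. set (q := sqrt (1 + s^4)) in *.
    assert (1 - s^4 <> 0) by lra.
    replace ((2 * s * q / (1 - s^4))^4) with (16 * s^4 * (q*q)^2 / (1 - s^4)^4) by (field; auto).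
    rewrite Hq2. field; auto.
  - apply Rmult_le_pos. replace (s^8) with ((s^4)^2) by ring. pose proof (pow2_ge_0 (s^4)). lra.
    apply Rlt_le, Rinv_0_lt_compat. apply pow_lt. lra.
Qed.

Lemma double s : -1 < s < 1 -> F (g s) = 2 * F s.
Proof. intros Hs.
  assert (E : F (g s) - 2 * F s = F (g 0) - 2 * F 0).
  { apply (zero_der_loc (fun x => F (g x) - 2 * F x) 0 s). intros x Hx.
    assert (Hx' : -1 < x < 1).
    { destruct (Rle_dec 0 s). rewrite Rmin_left, Rmax_right in Hx; lra.
      rewrite Rmin_right, Rmax_left in Hx; lra. }
    eapply der_val. apply der_minus. apply (der_comp F g). apply F_der. apply g_der; auto.
    apply der_scal, F_der.
    unfold f at 1. rewrite sqrt_g by auto. unfold f.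
    pose proof (u_lt1 x Hx') as Hu. pose proof (pos4 x) as H.
    assert (0 <= x^4) by (replace (x^4) with ((x^2)^2) by ring; apply pow2_ge_0).
    assert (Hq := sqrt_lt_R0 _ H). set (q := sqrt (1 + x^4)) in *.
    assert (1 - x^4 <> 0) by lra.
    assert (1 + 6 * x^4 + x^8 <> 0).
    { replace (x^8) with ((x^4)^2) by ring. pose proof (pow2_ge_0 (x^4)). lra. }
    match goal with |- ?a = ?b => change (@eq R a b) end. field. repeat split; lra. }
  replace (g 0) with 0 in E by (unfold g, Rdiv; rewrite Rmult_0_r, !Rmult_0_l; reflexivity). rewrite F0 in E. lra.
Qed.

Lemma g_ge s : 1/2 <= s < 1 -> 1 / (4 * (1 - s)) <= g s.
Proof. intros Hs. unfold g.
  assert (1 <= sqrt (1 + s^4)).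
  { rewrite <- sqrt_1 at 1. apply sqrt_le_1_alt. pose proof (pow2_ge_0 (s^2)). 
    replace (s^4) with ((s^2)^2) by ring. lra. }
  assert (Hu : s^4 < 1) by (apply u_lt1; lra).
  assert (1 - s^4 <= 4 * (1 - s)).
  { replace (1 - s^4) with ((1 - s) * ((1 + s) * (1 + s^2))) by ring.
    assert ((1 + s) * (1 + s^2) <= 4) by nra. nra. }
  apply Rle_trans with (1 / (1 - s^4)).
  - unfold Rdiv. rewrite !Rmult_1_l. apply Rinv_le_contravar; lra.
  - unfold Rdiv. apply Rmult_le_compat_r. apply Rlt_le, Rinv_0_lt_compat; lra. nra.
Qed.

Lemma F_lim : is_lim F p_infty (2 * F 1).
Proof. apply is_lim_spec. intros eps. simpl.
  destruct eps as [e He]; simpl.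
  set (s0 := Rmax (1/2) (1 - e/4)).
  assert (Hs0 : 1/2 <= s0 < 1).
  { unfold s0. split. apply Rmax_l. apply Rmax_lub_lt; lra. }
  exists (g s0). intros x Hx.
  assert (Lo : 2 * F 1 - e < F x).
  { pose proof (F_mono _ _ Hx). rewrite double in H by lra.
    assert (1 - s0 <= e/4) by (unfold s0; pose proof (Rmax_r (1/2) (1 - e/4)); lra).
    pose proof (F_mono s0 1 ltac:(lra)). lra. }
  assert (Up : F x < 2 * F 1).
  { set (s1 := 1 - 1 / (4 * (Rabs x + 1))).
    pose proof (Rabs_pos x). pose proof (Rle_abs x).
    assert (Hs1 : 1/2 <= s1 < 1).
    { unfold s1. split.
      - assert (1 / (4 * (Rabs x + 1)) <= 1/4).
        { unfold Rdiv. rewrite !Rmult_1_l. apply Rinv_le_contravar; lra. }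
        lra.
      - assert (0 < 1 / (4 * (Rabs x + 1))).
        { unfold Rdiv. rewrite Rmult_1_l. apply Rinv_0_lt_compat; lra. } lra. }
    pose proof (g_ge s1 Hs1).
    assert (1 / (4 * (1 - s1)) = Rabs x + 1) by (unfold s1; field; lra).
    pose proof (F_mono x (g s1) ltac:(lra)) as Hk. rewrite double in Hk by lra.
    pose proof (F_mono s1 1 ltac:(lra)). lra. }
  apply Rabs_def1; lra.
Qed.

Lemma zeta_val : zeta 2 = 2 * F 1.
Proof. change (real (Lim F p_infty) = 2 * F 1). rewrite (is_lim_unique _ _ _ F_lim). reflexivity. Qed.

Theorem mainTheorem8 (l : R) :
  - zeta 2 < 2 * l < zeta 2 ->
  sleafh 2 (2 * l) =
    2 * sleafh 2 l * sqrt (1 + (sleafh 2 l) ^ 4) / (1 - (sleafh 2 l) ^ 4).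
Proof.
  rewrite zeta_val. intros [H1 H2].
  assert (Fm1 : F (-1) = - F 1) by apply F_odd.
  assert (Hm := F_mono (-1) 1 ltac:(lra)).
  destruct (IVT_gen F (-1) 1 l F_cont) as [r [_ Hr]].
  { rewrite Rmin_left, Rmax_right by lra. lra. }
  assert (Hs : F (sleafh 2 l) = l).
  { apply (epsilon_spec (inhabits 0) (fun r => leaf_arc 2 r = l)). exists r. exact Hr. }
  set (s := sleafh 2 l) in *.
  assert (Hs1 : -1 < s < 1).
  { split.
    - destruct (Rle_lt_dec s (-1)) as [h|h]; auto.
      destruct (Req_dec s (-1)) as [e|e]. subst; rewrite e in Hs; lra.
      pose proof (F_mono s (-1) ltac:(lra)); lra.
    - destruct (Rle_lt_dec 1 s) as [h|h]; auto.
      destruct (Req_dec s 1) as [e|e]. rewrite e in Hs; lra.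
      pose proof (F_mono 1 s ltac:(lra)); lra. }
  assert (Hg : F (g s) = 2 * l) by (rewrite double; auto; lra).
  assert (Ht : F (sleafh 2 (2 * l)) = 2 * l).
  { apply (epsilon_spec (inhabits 0) (fun r => leaf_arc 2 r = 2 * l)). exists (g s). exact Hg. }
  change (sleafh 2 (2 * l) = g s). apply F_inj. congruence.
Qed.
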